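(* Let $n,k,s$ be positive integers with $2\le s\le\lfloor n/k\rfloor$, write $n=ds+s_0$ with $d=\lfloor n/s\rfloor$ and $s_0\le\min\{s,d\}$, and let $\gamma_{cc}(n,k,s)$ be the repair bandwidth of the Cubic Code for the Fixed Cluster Repair System with these parameters storing a file of size $M$. Then $$\gamma_{cc}(n,k,s)\le\frac{M/d}{1-\left(1-\frac{k}{(s+1)d}\right)^{s+1}}.$$
   Context: FCRS: $n=ds+s_0$ servers in clusters $1,\dots,s$ of size $d$ and a cluster $s+1$ of size $s_0$; any $k$ servers recover the file; a failed server in cluster $r$ is repaired from all $d$ servers of some cluster $i\in[s]$, $i\neq r$. Cubic Code: the file is split into $m$ chunks of size $M/m$ and encoded with a $(d^{s+1},m)$ MDS code with symbols $C_b$ indexed by $b=b_{s+1}\cdots b_1$, $b_i\in[d]$; server $(i,j)$ stores $\{C_b:b_i=j\}$ and, to repair $(r,\ell)$ from cluster $i$, sends $\{C_b:b_i=j,b_r=\ell\}$; here $m=\min\{d^{s+1}-\prod_{i=1}^{s+1}(d-k_i):k_i\in\mathbb Z_{\ge0},\ \sum_i k_i=k,\ k_{s+1}\le s_0\}$, and $\gamma_{cc}(n,k,s)=Md^s/m$. *)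

(* Defs.v *)
From mathcomp Require Import all_boot all_order all_algebra.
Set Implicit Arguments. Unset Strict Implicit. Unset Printing Implicit Defensive.
Import Order.TTheory GRing.Theory Num.Theory.
Local Open Scope ring_scope.

(* FCRS parameters: n servers, s clusters of size d = n %/ s, plus
   cluster s+1 of size s0 = n %% s (so n = d*s + s0). *)
Definition fcrs_d (n s : nat) : nat := (n %/ s)%N.
Definition fcrs_s0 (n s : nat) : nat := (n %% s)%N.

(* A choice (k_1, ..., k_{s+1}) of nonnegative integers; index i : 'I_s.+1
   stands for cluster i+1, so ord_max is cluster s+1.  Each k_i <= k
   automatically since they sum to k, so 'I_k.+1 loses nothing. *)
Definition cc_feasible (k s s0 : nat) (kv : {ffun 'I_s.+1 -> 'I_k.+1}) : bool :=
  ((\sum_(i < s.+1) (kv i : nat))%N == k) && ((kv ord_max : nat) <= s0)%N.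

Definition cc_value (d k s : nat) (kv : {ffun 'I_s.+1 -> 'I_k.+1}) : int :=
  (d ^ s.+1)%:Z - \prod_(i < s.+1) ((d%:Z) - (kv i : nat)%:Z).

(* m = min over feasible choices of cc_value.  (The default d^(s+1) is never
   below the true minimum when every k_i <= d, which holds under the
   theorem's hypotheses since k <= d.) *)
Definition cc_m (n k s : nat) : int :=
  \big[Order.min/((fcrs_d n s) ^ s.+1)%:Z]_(kv : {ffun 'I_s.+1 -> 'I_k.+1}
       | cc_feasible (fcrs_s0 n s) kv) cc_value (fcrs_d n s) kv.

Definition gamma_cc (R : realFieldType) (M : R) (n k s : nat) : R :=
  M * ((fcrs_d n s) ^ s)%:R / (cc_m n k s)%:~R.

(* Main.v *)
Require Import Defs.
From mathcomp Require Import all_boot all_order all_algebra.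
From mathcomp Require Import zify ring lra.
Import Order.TTheory GRing.Theory Num.Theory.
Local Open Scope ring_scope.

Lemma value_bound (R : realFieldType) (d k s : nat) (kv : {ffun 'I_s.+1 -> 'I_k.+1}) :
  (k <= d)%N -> (\sum_(i < s.+1) (kv i : nat))%N = k ->
  (d%:R ^+ s.+1 - (d%:R - k%:R / s.+1%:R) ^+ s.+1 : R) <= (cc_value d kv)%:~R.
Proof.
move=> kd hs.
rewrite /cc_value rmorphB /= rmorph_prod /=.
have -> : ((d^s.+1)%N%:~R : R) = d%:R ^+ s.+1 by rewrite -natrX.
rewrite (eq_bigr (fun i => d%:R - (kv i : nat)%:R)); last first.
  by move=> i _; rewrite rmorphB.
rewrite lerD2l lerN2.
have H1 : {in 'I_s.+1, forall i, (0:R) <= d%:R - (kv i : nat)%:R}.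
  move=> i _; rewrite subr_ge0 ler_nat.
  by apply: leq_trans kd; rewrite -ltnS ltn_ord.
have := Order.le_of_leif (leif_AGM H1).
rewrite /= card_ord.
have -> : (\sum_(i in 'I_s.+1) (d%:R - (kv i : nat)%:R) : R) = s.+1%:R * d%:R - k%:R.
  rewrite sumrB sumr_const card_ord mulr_natl.
  by rewrite -[in RHS]hs natr_sum.
have -> : ((s.+1%:R * d%:R - k%:R) / s.+1%:R : R) = d%:R - k%:R / s.+1%:R.
  by field; rewrite addrC natr1 pnatr_eq0.
by [].
Qed.

Lemma min_bound (R : realFieldType) (I : finType) (P : pred I) (F : I -> int) (x0 : int) (B : R) :
  B <= x0%:~R -> (forall i, P i -> B <= (F i)%:~R) ->
  B <= (\big[Order.min/x0]_(i | P i) F i)%:~R.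
Proof.
move=> h0 hF; apply: (big_ind (fun x : int => B <= x%:~R)) => //.
by move=> x y hx hy; case: (leP x y).
Qed.

Theorem corollary1 (R : realFieldType) (M : R) (n k s : nat) :
  (0 < M) -> (0 < n)%N -> (0 < k)%N -> (2 <= s)%N -> (s <= n %/ k)%N ->
  (fcrs_s0 n s <= minn s (fcrs_d n s))%N ->
  gamma_cc M n k s <=
    (M / (fcrs_d n s)%:R) /
      (1 - (1 - k%:R / ((s.+1)%:R * (fcrs_d n s)%:R)) ^+ s.+1).
Proof.
move=> M0 n0 k0 s2 skn _.
rewrite /gamma_cc.
set d := fcrs_d n s.
have kd : (k <= d)%N.
  have e := divn_eq n s.
  have lt := ltn_pmod n (leq_trans (isT : (0 < 2)%N) s2).
  rewrite leq_divRL // in skn.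
  rewrite /d /fcrs_d; move: e lt skn; set q := (n %/ s)%N; set r := (n %% s)%N.
  nia.
have d0 : (0 < d)%N by apply: leq_trans kd.
set B : R := d%:R ^+ s.+1 - (d%:R - k%:R / s.+1%:R) ^+ s.+1.
have s0 : (0 : R) < s.+1%:R by rewrite ltr0n.
have dR0 : (0 : R) < d%:R by rewrite ltr0n.
have mu0 : (0 : R) <= d%:R - k%:R / s.+1%:R.
  rewrite subr_ge0 ler_pdivrMr // -natrM ler_nat; nia.
have mud : d%:R - k%:R / s.+1%:R < (d%:R : R).
  rewrite ltrBlDr ltrDl divr_gt0 // ltr0n //.
have B0 : 0 < B by rewrite /B subr_gt0 ltrXn2r.
have hm : B <= (cc_m n k s)%:~R.
  apply: min_bound.
    have -> : (((d ^ s.+1)%N)%:~R : R) = d%:R ^+ s.+1 by rewrite -natrX.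
    by rewrite /B lerBlDr lerDl exprn_ge0.
  move=> kv /andP [/eqP hs _]; exact: value_bound.
have hm0 : (0 : R) < (cc_m n k s)%:~R by apply: lt_le_trans hm.
move: hm hm0; set c : R := (cc_m n k s)%:~R => hm hm0.
clearbody c; clearbody d.
rewrite natrX.
move: B0 hm; rewrite /B => B0 hm; clear B.
move: s0 dR0 mu0 mud B0 hm.
set S : R := s.+1%:R; set D : R := d%:R; set K : R := k%:R.
clearbody S D K => s0 dR0 mu0 mud B0 hm.
have sne : S != 0 by exact: lt0r_neq0.
have dne : D != 0 by exact: lt0r_neq0.
have -> : (1 - K / (S * D) : R) = (D - K / S) / D.
  by field; rewrite sne dne.
move: B0 hm mu0 mud; set mu := D - K / S; clearbody mu => B0 hm mu0 mud.
have -> : M / D / (1 - (mu / D) ^+ s.+1) = M * D ^+ s / (D ^+ s.+1 - mu ^+ s.+1).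
  rewrite expr_div_n ![D ^+ s.+1]exprSr.
  have e0 : D ^+ s != 0 by rewrite expf_neq0.
  have ne : D ^+ s * D - mu ^+ s.+1 != 0.
    by rewrite -exprSr lt0r_neq0.
  move: e0 ne; set e := D ^+ s; set a := mu ^+ s.+1; clearbody e a => e0 ne.
  by field; rewrite dne e0 ne.
rewrite ler_pM2l ?mulr_gt0 ?exprn_gt0 //.
by rewrite lef_pV2 ?posrE.
Qed.
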